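(* Let $m=m_n$ and $\delta=\delta_n>0$ satisfy $m^2/n\to0$ and $\delta^2 m/n\to0$ as $n\to\infty$, and fix $\varepsilon>0$. Define $\varphi_n:[1/4,3/4]\to\mathbb{R}$ by \[ \varphi_n(x) = h(x) + \frac{m(m+1)}{4n}\big(g(x) - \log 4\big) + \frac{m\delta^2}{n} f(x) + \frac{1}{2n} g(x), \] where $f(x) = ((1-2x)^2+\varepsilon)^{1/2}$, $g(x) = -\log(x(1-x))$ and $h(x) = -x\log x - (1-x)\log(1-x)$. Then for all sufficiently large $n$, $\varphi_n$ is strictly concave on $[1/4,3/4]$ and has a unique maximum at $x=1/2$. Moreover, $\varphi_n''$ converges uniformly to $h''$ on $[1/4,3/4]$ as $n\to\infty$. *)

(* Defs.v *)
From Stdlib Require Import Reals Lra.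
From Coquelicot Require Import Coquelicot.
Open Scope R_scope.

Definition f_eps (eps x : R) : R := sqrt ((1 - 2 * x) ^ 2 + eps).
Definition g_fun (x : R) : R := - ln (x * (1 - x)).
Definition h_fun (x : R) : R := - x * ln x - (1 - x) * ln (1 - x).

Definition phi (m : nat -> nat) (delta : nat -> R) (eps : R) (n : nat) (x : R) : R :=
  h_fun x
  + INR (m n) * (INR (m n) + 1) / (4 * INR n) * (g_fun x - ln 4)
  + INR (m n) * delta n ^ 2 / INR n * f_eps eps x
  + 1 / (2 * INR n) * g_fun x.

Definition in_I (x : R) : Prop := 1/4 <= x <= 3/4.

Definition strictly_concave_on_I (F : R -> R) : Prop :=
  forall x y t, in_I x -> in_I y -> x <> y -> 0 < t < 1 ->
    t * F x + (1 - t) * F y < F (t * x + (1 - t) * y).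

(* Main.v *)
Require Import Defs.
From Stdlib Require Import Reals Lra Lia.
From Coquelicot Require Import Coquelicot.
Open Scope R_scope.

Definition phiG (eps A B C x : R) := h_fun x + A*(g_fun x - ln 4) + B*f_eps eps x + C*g_fun x.
Definition d1 (eps A B C x : R) := (ln (1-x) - ln x) + A*(-(1-2*x)/(x*(1-x)))
  + B*(-2*(1-2*x)/sqrt((1-2*x)^2+eps)) + C*(-(1-2*x)/(x*(1-x))).
Definition d2 (eps A B C x : R) := (-1/x - 1/(1-x)) + (A+C)*(1/x^2 + 1/(1-x)^2)
  + B*(4*eps/(((1-2*x)^2+eps)*sqrt((1-2*x)^2+eps))).

Lemma der1 eps A B C x : 0 < x < 1 -> 0 < eps -> is_derive (phiG eps A B C) x (d1 eps A B C x).
Proof.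
  intros [H0 H1] He. unfold phiG, h_fun, g_fun, f_eps, d1.
  assert (Hu : 0 < (1-2*x)^2 + eps) by (apply Rplus_le_lt_0_compat; [apply pow2_ge_0|lra]).
  assert (Hs : 0 < sqrt ((1-2*x)^2 + eps)) by (apply sqrt_lt_R0; lra).
  assert (0 < x*(1-x)) by (apply Rmult_lt_0_compat; lra).
  auto_derive; replace (1 + - x) with (1 - x) by ring; replace (1 + - (2*x)) with (1 - 2*x) by ring.
  - replace ((1 - 2 * x) * ((1 - 2 * x) * 1) + eps) with ((1 - 2*x)^2+eps) by ring.
    repeat split; lra.
  - replace ((1 - 2 * x) * ((1 - 2 * x) * 1) + eps) with ((1 - 2*x)^2+eps) by ring.
    field. repeat split; lra.
Qed.

Lemma der2 eps A B C x : 0 < x < 1 -> 0 < eps -> is_derive (d1 eps A B C) x (d2 eps A B C x).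
Proof.
  intros [H0 H1] He. unfold d1, d2.
  assert (Hu : 0 < (1-2*x)^2 + eps) by (apply Rplus_le_lt_0_compat; [apply pow2_ge_0|lra]).
  assert (Hs : 0 < sqrt ((1-2*x)^2 + eps)) by (apply sqrt_lt_R0; lra).
  assert (0 < x*(1-x)) by (apply Rmult_lt_0_compat; lra).
  assert (Hss : sqrt ((1-2*x)^2 + eps) * sqrt ((1-2*x)^2 + eps) = (1-2*x)^2 + eps) by (apply sqrt_sqrt; lra).
  auto_derive; replace (1 + - x) with (1 - x) by ring; replace (1 + - (2*x)) with (1 - 2*x) by ring.
  - replace ((1 - 2 * x) * ((1 - 2 * x) * 1) + eps) with ((1 - 2*x)^2+eps) by ring.
    repeat split; lra.
  - replace ((1 - 2 * x) * ((1 - 2 * x) * 1) + eps) with ((1 - 2*x)^2+eps) by ring.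
    set (s := sqrt ((1-2*x)^2 + eps)) in *.
    rewrite <- Hss. replace eps with (s*s - (1-2*x)^2) by lra.
    field. repeat split; lra.
Qed.

Lemma derh1 x : 0 < x < 1 -> is_derive h_fun x (ln (1-x) - ln x).
Proof.
  intros [H0 H1]. unfold h_fun.
  auto_derive; replace (1 + - x) with (1 - x) by ring.
  - repeat split; lra.
  - field. repeat split; lra.
Qed.
Lemma derh2 x : 0 < x < 1 -> is_derive (fun y => ln (1-y) - ln y) x (-1/x - 1/(1-x)).
Proof.
  intros [H0 H1].
  auto_derive; replace (1 + - x) with (1 - x) by ring.
  - repeat split; lra.
  - field. repeat split; lra.
Qed.
Lemma loc01 x : 0 < x < 1 -> locally x (fun y => 0 < y < 1).
Proof. intros Hx. apply (open_and (fun y => 0 < y) (fun y => y < 1)); [apply open_gt|apply open_lt|exact Hx]. Qed.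

Lemma D2phi eps A B C x : 0 < x < 1 -> 0 < eps -> Derive_n (phiG eps A B C) 2 x = d2 eps A B C x.
Proof.
  intros Hx He. simpl. apply is_derive_unique.
  apply is_derive_ext_loc with (d1 eps A B C); [|now apply der2].
  apply filter_imp with (2 := loc01 x Hx). intros y Hy. symmetry. apply is_derive_unique. now apply der1.
Qed.
Lemma D2h x : 0 < x < 1 -> Derive_n h_fun 2 x = -1/x - 1/(1-x).
Proof.
  intros Hx. simpl. apply is_derive_unique.
  apply is_derive_ext_loc with (fun y => ln (1-y) - ln y); [|now apply derh2].
  apply filter_imp with (2 := loc01 x Hx). intros y Hy. symmetry. apply is_derive_unique. now apply derh1.
Qed.

Lemma bound_d2 eps A B C x : 0 < eps -> 0 <= A -> 0 <= B -> 0 <= C -> in_I x ->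
  Rabs (d2 eps A B C x - (-1/x - 1/(1-x))) <= (A+C)*32 + B*(4/sqrt eps).
Proof.
  intros He HA HB HC [H0 H1]. unfold d2.
  set (u := (1-2*x)^2+eps).
  assert (Hu : eps <= u) by (unfold u; assert (0 <= (1-2*x)^2) by apply pow2_ge_0; lra).
  assert (Hse : 0 < sqrt eps) by (apply sqrt_lt_R0; lra).
  assert (Hsu : sqrt eps <= sqrt u) by (apply sqrt_le_1_alt; lra).
  assert (HG0 : 0 <= 1/x^2 + 1/(1-x)^2).
  { apply Rplus_le_le_0_compat; apply Rlt_le; apply Rdiv_lt_0_compat; try lra; apply pow_lt; lra. }
  assert (HG1 : 1/x^2 + 1/(1-x)^2 <= 32).
  { assert (1/x^2 <= 16). { apply (Rmult_le_reg_r (x^2)). apply pow_lt; lra. field_simplify; [|lra]. nra. }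
    assert (1/(1-x)^2 <= 16). { apply (Rmult_le_reg_r ((1-x)^2)). apply pow_lt; lra. field_simplify; [|lra]. nra. }
    lra. }
  assert (HF0 : 0 <= 4*eps/(u*sqrt u)).
  { apply Rlt_le, Rdiv_lt_0_compat; [lra|]. apply Rmult_lt_0_compat; lra. }
  assert (HF1 : 4*eps/(u*sqrt u) <= 4/sqrt eps).
  { unfold Rdiv. rewrite Rinv_mult. 
    assert (/u <= /eps) by (apply Rinv_le_contravar; lra).
    assert (/sqrt u <= /sqrt eps) by (apply Rinv_le_contravar; lra).
    assert (0 < /sqrt u) by (apply Rinv_0_lt_compat; lra).
    assert (Hk : 4*eps*(/u * /sqrt u) <= 4*eps*(/eps * /sqrt eps)).
    { apply Rmult_le_compat_l; [lra|]. apply Rmult_le_compat; try lra. apply Rlt_le, Rinv_0_lt_compat; lra. }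
    replace (4*eps*(/eps * /sqrt eps)) with (4 * /sqrt eps) in Hk by (field; lra). lra. }
  replace ((-1/x - 1/(1-x)) + (A+C)*(1/x^2 + 1/(1-x)^2) + B*(4*eps/(u*sqrt u)) - (-1/x - 1/(1-x)))
    with ((A+C)*(1/x^2 + 1/(1-x)^2) + B*(4*eps/(u*sqrt u))) by ring.
  rewrite Rabs_pos_eq.
  - apply Rplus_le_compat; [apply Rmult_le_compat_l; lra|apply Rmult_le_compat_l; lra].
  - apply Rplus_le_le_0_compat; apply Rmult_le_pos; lra.
Qed.

Lemma h2_le x : in_I x -> -1/x - 1/(1-x) <= -4.
Proof.
  intros [H0 H1].
  replace (-1/x - 1/(1-x)) with (-(1/(x*(1-x)))) by (field; lra).
  assert (4 <= 1/(x*(1-x))).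
  { apply (Rmult_le_reg_r (x*(1-x))). nra. field_simplify; [|lra]. assert (0 <= (2*x-1)^2) by apply pow2_ge_0. nra. }
  lra.
Qed.

Section Conc.
Lemma conc_lt (F F1 F2 : R -> R) :
  (forall x, in_I x -> derivable_pt_lim F x (F1 x)) ->
  (forall x, in_I x -> derivable_pt_lim F1 x (F2 x)) ->
  (forall x, in_I x -> F2 x < 0) ->
  forall x y t, in_I x -> in_I y -> x < y -> 0 < t < 1 ->
    t * F x + (1 - t) * F y < F (t * x + (1 - t) * y).
Proof.
  intros HF HF1 HF2 x y t [Hx0 Hx1] [Hy0 Hy1] Hxy Ht.
  assert (Hdec : forall a b, in_I a -> in_I b -> a < b -> F1 b < F1 a).
  { intros a b [Ha0 Ha1] [Hb0 Hb1] Hab.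
    destruct (MVT_cor2 F1 F2 a b Hab) as [c [Hc1 Hc2]].
    - intros c Hc. apply HF1. unfold in_I; lra.
    - assert (F2 c < 0) by (apply HF2; unfold in_I; lra). nra. }
  set (z := t * x + (1 - t) * y).
  assert (Hxz : x < z) by (unfold z; nra).
  assert (Hzy : z < y) by (unfold z; nra).
  destruct (MVT_cor2 F F1 x z Hxz) as [c1 [E1 Hc1]].
  { intros c Hc. apply HF. unfold in_I; lra. }
  destruct (MVT_cor2 F F1 z y Hzy) as [c2 [E2 Hc2]].
  { intros c Hc. apply HF. unfold in_I; lra. }
  assert (Hlt : F1 c2 < F1 c1) by (apply Hdec; unfold in_I; lra).
  assert (Ez1 : z - x = (1-t)*(y-x)) by (unfold z; ring).
  assert (Ez2 : y - z = t*(y-x)) by (unfold z; ring).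
  rewrite Ez1 in E1. rewrite Ez2 in E2.
  assert (Hp : 0 < t*(1-t)*(y-x)) by (apply Rmult_lt_0_compat; [apply Rmult_lt_0_compat|]; lra).
  assert (t * F x + (1 - t) * F y - F z = t*(1-t)*(y-x)*(F1 c2 - F1 c1)).
  { replace (F x) with (F z - F1 c1 * ((1 - t) * (y - x))) by lra.
    replace (F y) with (F z + F1 c2 * (t * (y - x))) by lra. ring. }
  assert (t*(1-t)*(y-x)*(F1 c2 - F1 c1) < 0).
  { replace 0 with (t*(1-t)*(y-x)*0) by ring. apply Rmult_lt_compat_l; lra. }
  lra.
Qed.

Lemma conc (F F1 F2 : R -> R) :
  (forall x, in_I x -> derivable_pt_lim F x (F1 x)) ->
  (forall x, in_I x -> derivable_pt_lim F1 x (F2 x)) ->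
  (forall x, in_I x -> F2 x < 0) ->
  strictly_concave_on_I F.
Proof.
  intros HF HF1 HF2 x y t Hx Hy Hxy Ht.
  destruct (Rlt_or_le x y) as [H|H].
  - now apply (conc_lt F F1 F2).
  - assert (y < x) by (destruct H; [auto| congruence]).
    pose proof (conc_lt F F1 F2 HF HF1 HF2 y x (1-t) Hy Hx H0 ltac:(lra)) as K.
    replace (1 - (1-t)) with t in K by ring.
    replace (t * x + (1 - t) * y) with ((1 - t) * y + t * x) by ring. lra.
Qed.
End Conc.

Lemma phiG_sym eps A B C x : phiG eps A B C (1 - x) = phiG eps A B C x.
Proof.
  unfold phiG, h_fun, g_fun, f_eps.
  replace (1 - (1 - x)) with x by ring.
  replace ((1 - x) * x) with (x * (1 - x)) by ring.
  replace ((1 - 2 * (1 - x)) ^ 2) with ((1 - 2 * x) ^ 2) by ring.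
  ring.
Qed.

Lemma seqs (m : nat -> nat) (delta : nat -> R) (eps : R)
  (Hm : is_lim_seq (fun n => INR (m n) ^ 2 / INR n) 0)
  (Hmd : is_lim_seq (fun n => delta n ^ 2 * INR (m n) / INR n) 0)
  (Heps : 0 < eps) :
  forall e, 0 < e -> exists N, forall n, (N <= n)%nat ->
    let a := INR (m n) * (INR (m n) + 1) / (4 * INR n) in
    let b := INR (m n) * delta n ^ 2 / INR n in
    let c := 1 / (2 * INR n) in
    0 < INR n /\ 0 <= a /\ 0 <= b /\ 0 <= c /\ (a + c) * 32 + b * (4 / sqrt eps) < e.
Proof.
  intros e He.
  assert (HK : 0 < 4 / sqrt eps) by (apply Rdiv_lt_0_compat; [lra|apply sqrt_lt_R0; lra]).
  apply is_lim_seq_spec in Hm. apply is_lim_seq_spec in Hmd.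
  destruct (Hm (mkposreal (e/48) ltac:(lra))) as [N1 HN1].
  assert (He2 : 0 < e / 3 / (4 / sqrt eps)) by (apply Rdiv_lt_0_compat; lra).
  destruct (Hmd (mkposreal _ He2)) as [N2 HN2].
  destruct (archimed_cor1 (e/48) ltac:(lra)) as [N3 [HN3 HN3']].
  exists (N1 + N2 + N3)%nat. intros n Hn a b c.
  specialize (HN1 n ltac:(lia)). specialize (HN2 n ltac:(lia)). simpl in HN1, HN2.
  rewrite Rminus_0_r in HN1, HN2.
  assert (Hn0 : 0 < INR n) by (apply lt_0_INR; lia).
  assert (Hinv : / INR n <= / INR N3).
  { apply Rinv_le_contravar; [apply lt_0_INR; lia|apply le_INR; lia]. }
  assert (Hm0 : 0 <= INR (m n)) by apply pos_INR.
  assert (Hmm : INR (m n) <= INR (m n) ^ 2).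
  { destruct (m n) as [|k]. simpl; lra. assert (1 <= INR (S k)) by (apply (le_INR 1); lia). nra. }
  assert (Ha0 : 0 <= a).
  { unfold a. apply Rmult_le_pos; [apply Rmult_le_pos; lra|]. apply Rlt_le, Rinv_0_lt_compat; lra. }
  assert (Hb0 : 0 <= b).
  { unfold b. apply Rmult_le_pos; [apply Rmult_le_pos; [lra|apply pow2_ge_0]|]. apply Rlt_le, Rinv_0_lt_compat; lra. }
  assert (Hc0 : 0 < c) by (unfold c; apply Rdiv_lt_0_compat; lra).
  assert (Ha1 : a <= (INR (m n) ^ 2 / INR n) / 2).
  { unfold a. unfold Rdiv. 
    replace (INR (m n) * (INR (m n) + 1) * / (4 * INR n)) with ((INR (m n) ^2 + INR (m n)) * / INR n * / 4) by (field; lra).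
    replace (INR (m n) ^ 2 * / INR n * / 2) with ((INR (m n) ^2 + INR (m n)^2) * / INR n * / 4) by (field; lra).
    apply Rmult_le_compat_r; [lra|]. apply Rmult_le_compat_r; [apply Rlt_le, Rinv_0_lt_compat; lra|lra]. }
  assert (Hq : INR (m n) ^ 2 / INR n < e / 48).
  { apply Rabs_def2 in HN1. lra. }
  assert (Hbq : b = delta n ^ 2 * INR (m n) / INR n) by (unfold b; field; lra).
  assert (Hb1 : b < e / 3 / (4 / sqrt eps)).
  { rewrite Hbq. apply Rabs_def2 in HN2. lra. }
  assert (Hb2 : b * (4 / sqrt eps) < e / 3).
  { apply (Rmult_lt_compat_r (4 / sqrt eps)) in Hb1; [|lra].
    replace (e / 3 / (4 / sqrt eps) * (4 / sqrt eps)) with (e/3) in Hb1 by (field; assert (0 < sqrt eps) by (apply sqrt_lt_R0; lra); lra). lra. }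
  assert (Hc1 : c * 32 < e / 3).
  { unfold c. replace (1 / (2 * INR n) * 32) with (16 * / INR n) by (field; lra). lra. }
  repeat split; try lra.
Qed.

Theorem lemma5p2 (m : nat -> nat) (delta : nat -> R) (eps : R)
  (Hdelta : forall n, 0 < delta n)
  (Hm : is_lim_seq (fun n => INR (m n) ^ 2 / INR n) 0)
  (Hmd : is_lim_seq (fun n => delta n ^ 2 * INR (m n) / INR n) 0)
  (Heps : 0 < eps) :
  (exists N : nat, forall n : nat, (N <= n)%nat ->
     strictly_concave_on_I (phi m delta eps n)
     /\ in_I (1/2)
     /\ (forall x, in_I x -> x <> 1/2 -> phi m delta eps n x < phi m delta eps n (1/2)))
  /\
  (forall e : R, 0 < e -> exists N : nat, forall n : nat, (N <= n)%nat ->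
     forall x, in_I x ->
       Rabs (Derive_n (phi m delta eps n) 2 x - Derive_n h_fun 2 x) < e).
Proof.
  split.
  - destruct (seqs m delta eps Hm Hmd Heps 4 ltac:(lra)) as [N HN]. exists N.
    intros n Hn. specialize (HN n Hn). cbv zeta in HN.
    destruct HN as [Hn0 [Ha [Hb [Hc Hs]]]].
    change (phi m delta eps n) with (phiG eps (INR (m n) * (INR (m n) + 1) / (4 * INR n))
      (INR (m n) * delta n ^ 2 / INR n) (1 / (2 * INR n))).
    revert Ha Hb Hc Hs.
    generalize (INR (m n) * (INR (m n) + 1) / (4 * INR n)) (INR (m n) * delta n ^ 2 / INR n) (1 / (2 * INR n)).
    intros A B C Ha Hb Hc Hs.
    assert (Hconc : strictly_concave_on_I (phiG eps A B C)).
    { apply conc with (d1 eps A B C) (d2 eps A B C).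
      - intros x Hx. apply is_derive_Reals. apply der1; [unfold in_I in Hx; lra|exact Heps].
      - intros x Hx. apply is_derive_Reals. apply der2; [unfold in_I in Hx; lra|exact Heps].
      - intros x Hx. pose proof (bound_d2 eps A B C x Heps Ha Hb Hc Hx) as K1.
        pose proof (h2_le x Hx) as K2.
        pose proof (Rle_abs (d2 eps A B C x - (-1 / x - 1 / (1 - x)))). lra. }
    split; [exact Hconc|split; [unfold in_I; lra|]].
    intros x Hx Hne.
    assert (Hx' : in_I (1 - x)) by (unfold in_I in *; lra).
    pose proof (Hconc x (1-x) (1/2) Hx Hx' ltac:(lra) ltac:(lra)) as K.
    rewrite phiG_sym in K. replace (1/2*x + (1-1/2)*(1-x)) with (1/2) in K by field. lra.
  - intros e He. destruct (seqs m delta eps Hm Hmd Heps e He) as [N HN]. exists N.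
    intros n Hn x Hx. specialize (HN n Hn). cbv zeta in HN.
    destruct HN as [Hn0 [Ha [Hb [Hc Hs]]]].
    change (phi m delta eps n) with (phiG eps (INR (m n) * (INR (m n) + 1) / (4 * INR n))
      (INR (m n) * delta n ^ 2 / INR n) (1 / (2 * INR n))).
    revert Ha Hb Hc Hs.
    generalize (INR (m n) * (INR (m n) + 1) / (4 * INR n)) (INR (m n) * delta n ^ 2 / INR n) (1 / (2 * INR n)).
    intros A B C Ha Hb Hc Hs.
    assert (Hx01 : 0 < x < 1) by (unfold in_I in Hx; lra).
    rewrite D2phi by auto. rewrite D2h by auto.
    eapply Rle_lt_trans; [apply bound_d2|]; eauto.
Qed.
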